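(* Let $u\in\mathbb{R}^d$ be a utility vector, $\mathrm{util}(x)=u^Tx$, let $\epsilon\in[0,1]$, and let $A$ be a finite set of pairs $(y,z)$ of tuples in $\mathbb{R}^d$ with $\mathrm{util}(y)<\mathrm{util}(z)$ for each pair. Consider a tuple $x\in\mathbb{R}^d$ such that $\mathrm{util}(x)>\mathrm{util}(z)$ and $\mathrm{util}(x)-\mathrm{util}(z)>\epsilon\,\mathrm{util}(x)$ for every $(y,z)\in A$. Then there exists a vector $v\in\mathbb{R}^d$ such that, for all $(y,z)\in A$, $$v^T(z-y)\ge 1,\qquad v^T(x-z)\ge 1,\qquad v^T((1-\epsilon)x-z)\ge 1.$$ *)

(* Defs.v *)
From mathcomp Require Import all_boot all_order all_algebra.
Set Implicit Arguments. Unset Strict Implicit. Unset Printing Implicit Defensive.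
Import Order.TTheory GRing.Theory Num.Theory.
Local Open Scope ring_scope.

Definition dotv (R : realFieldType) (d : nat) (v x : 'rV[R]_d) : R :=
  \sum_(i < d) v 0 i * x 0 i.

Definition util (R : realFieldType) (d : nat) (u x : 'rV[R]_d) : R := dotv u x.

(* Main.v *)
Require Import Defs.
From mathcomp Require Import all_boot all_order all_algebra.
Import Order.TTheory GRing.Theory Num.Theory.
Local Open Scope ring_scope.

Lemma dotvZl (R : realFieldType) (d : nat) (c : R) (v w : 'rV[R]_d) :
  dotv (c *: v) w = c * dotv v w.
Proof.
rewrite /dotv mulr_sumr; apply: eq_bigr => i _; by rewrite mxE mulrA.
Qed.

Lemma dotvB (R : realFieldType) (d : nat) (v w1 w2 : 'rV[R]_d) :
  dotv v (w1 - w2) = dotv v w1 - dotv v w2.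
Proof.
rewrite /dotv -sumrB; apply: eq_bigr => i _; by rewrite !mxE mulrBr.
Qed.

Lemma dotvZr (R : realFieldType) (d : nat) (c : R) (v w : 'rV[R]_d) :
  dotv v (c *: w) = c * dotv v w.
Proof.
rewrite /dotv mulr_sumr; apply: eq_bigr => i _; by rewrite mxE mulrCA.
Qed.

Lemma le_sum_seq (R : realFieldType) (T : eqType) (f : T -> R) (s : seq T) p :
  (forall q, q \in s -> 0 <= f q) -> p \in s -> f p <= \sum_(q <- s) f q.
Proof.
move=> H Hp; rewrite (big_rem p Hp) /= lerDl big_seq.
by apply: sumr_ge0 => q /mem_rem; exact: H.
Qed.

Theorem proposition6p1 (R : realFieldType) (d : nat) (u : 'rV[R]_d) (eps : R)
  (A : seq ('rV[R]_d * 'rV[R]_d)) (x : 'rV[R]_d) :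
  0 <= eps -> eps <= 1 ->
  (forall p, p \in A -> util u p.1 < util u p.2) ->
  (forall p, p \in A -> util u x > util u p.2 /\
                        util u x - util u p.2 > eps * util u x) ->
  exists v : 'rV[R]_d, forall p, p \in A ->
    [/\ 1 <= dotv v (p.2 - p.1),
        1 <= dotv v (x - p.2)
      & 1 <= dotv v ((1 - eps) *: x - p.2)].
Proof.
move=> e0 e1 H1 H2.
pose a p := util u p.2 - util u p.1.
pose b (p : 'rV[R]_d * 'rV[R]_d) := util u x - util u p.2.
pose e (p : 'rV[R]_d * 'rV[R]_d) := util u x - util u p.2 - eps * util u x.
have pos p : p \in A -> [/\ 0 < a p, 0 < b p & 0 < e p].
  move=> pA; have := H1 p pA; have [h1 h2] := H2 p pA.
  rewrite /a /b /e; split; rewrite ?subr_gt0 //.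
exists ((\sum_(p <- A) ((a p)^-1 + (b p)^-1 + (e p)^-1)) *: u).
move=> p pA; have [ha hb he] := pos p pA.
have key : forall t, 0 < t -> t^-1 <= \sum_(p <- A) ((a p)^-1 + (b p)^-1 + (e p)^-1) -> 1 <= (\sum_(p <- A) ((a p)^-1 + (b p)^-1 + (e p)^-1)) * t.
  move=> t t0 ht; rewrite -(ler_pM2r t0) (mulVf (lt0r_neq0 t0)) in ht; exact: ht.
have ge := @le_sum_seq R _ (fun p => (a p)^-1 + (b p)^-1 + (e p)^-1) A p.
have nn : forall q, q \in A -> 0 <= (a q)^-1 + (b q)^-1 + (e q)^-1.
  move=> q qA; have [qa qb qe] := pos q qA.
  by rewrite !addr_ge0 // ltW // invr_gt0.
have S := ge nn pA.
have iA : 0 <= (a p)^-1 by rewrite ltW // invr_gt0.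
have iB : 0 <= (b p)^-1 by rewrite ltW // invr_gt0.
have iE : 0 <= (e p)^-1 by rewrite ltW // invr_gt0.
have Ee : (1 - eps) * dotv u x - dotv u p.2 = e p.
  by rewrite /e /util mulrBl mul1r addrAC.
rewrite !dotvZl !dotvB dotvZr Ee -/(util u p.2) -/(util u p.1) -/(util u x) -/(a p) -/(b p).
split; apply: key => //; apply: le_trans S.
- by rewrite -addrA lerDl addr_ge0.
- by rewrite -addrA addrC -addrA lerDl addr_ge0.
- by rewrite lerDr addr_ge0.
Qed.
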